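(* Let $(L,\preceq,\bot,\top)$ be a bounded lattice with at least three elements and let $K_1,K_2$ be blocks of $L$. Then either $K_1\cap K_2$ is a block of $L$, or $K_1$ and $K_2$ are independent blocks of $L$.
   Context: For $k\in L$ let ${\uparrow}k=\{x\in L\mid k\preceq x\}$ and ${\downarrow}k=\{x\in L\mid x\preceq k\}$. A block of $L$ is a sublattice $K\subsetneq L$ (a proper subset) such that $K\setminus\{\bot,\top\}\neq\varnothing$ and $({\uparrow}k\cup{\downarrow}k)\setminus\{\bot,\top\}\subseteq K$ for every $k\in K\setminus\{\bot,\top\}$. Two blocks $K_1,K_2$ are independent if $K_1\cap K_2\subseteq\{\bot,\top\}$. *)

(* Defs.v *)
From mathcomp Require Import all_boot all_order.
Set Implicit Arguments. Unset Strict Implicit. Unset Printing Implicit Defensive.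
Import Order.TTheory.
Local Open Scope order_scope.

(* Subsets of a (possibly infinite) lattice are represented as predicates L -> Prop. *)
Section Blocks.
Context {d : Order.disp_t} {L : tbLatticeType d}.

Definition is_sublattice (K : L -> Prop) : Prop :=
  forall x y, K x -> K y -> K (x `&` y) /\ K (x `|` y).

Definition is_block (K : L -> Prop) : Prop :=
  [/\ is_sublattice K,
      (exists x : L, ~ K x),
      (exists k, [/\ K k, k <> \bot & k <> \top])
    & forall k, K k -> k <> \bot -> k <> \top ->
        forall x : L, (k <= x \/ x <= k) -> x <> \bot -> x <> \top -> K x].

Definition independent_blocks (K1 K2 : L -> Prop) : Prop :=
  forall x, K1 x -> K2 x -> x = \bot \/ x = \top.

End Blocks.

(* Main.v *)
Require Import Defs.
From mathcomp Require Import all_boot all_order.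
From Stdlib Require Import Classical.
Import Order.TTheory.
Local Open Scope order_scope.

Theorem proposition19 (d : Order.disp_t) (L : tbLatticeType d)
  (three : exists x y z : L, [/\ x <> y, y <> z & x <> z])
  (K1 K2 : L -> Prop) (hK1 : is_block K1) (hK2 : is_block K2) :
  is_block (fun x => K1 x /\ K2 x) \/ independent_blocks K1 K2.
Proof.
case: (classic (exists k, [/\ K1 k /\ K2 k, k <> \bot & k <> \top])) => [Hk|Hn].
- left; case: hK1 => [s1 [z1 nz1] _ c1]; case: hK2 => [s2 _ _ c2].
  split.
  + move=> x y [a1 a2] [b1 b2].
    have [? ?] := s1 x y a1 b1; have [? ?] := s2 x y a2 b2; tauto.
  + by exists z1 => -[].
  + exact: Hk.
  + move=> k [k1 k2] kb kt x hx xb xt; split; [exact: c1 k k1 kb kt x hx xb xt|exact: c2 k k2 kb kt x hx xb xt].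
- right => x a b.
  case: (classic (x = \bot)) => [->|xb]; first by left.
  case: (classic (x = \top)) => [->|xt]; first by right.
  by exfalso; apply: Hn; exists x.
Qed.
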